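(* Let $F:\mathbb{F}_{2^n}\to\mathbb{F}_{2^n}$ be differentially $4$-uniform. Let $A=\{(a,c,d):\exists\,b\text{ with }\mathrm{EBCT}_F(a,b,c,d)=4\}$ and $B=\{(c,d,b):\exists\,a\text{ with }\mathrm{EBCT}_F(a,b,c,d)=4\}$. For $a,b,c,d\in\mathbb{F}_{2^n}^*$: $\mathrm{EBCT}_F(a,b,c,d)=2$ if and only if $\mathrm{LBCT}_F(a,c,d)=\mathrm{UBCT}_F(c,d,b)=2$. Furthermore, for $a,c,d\in\mathbb{F}_{2^n}^*$, $(a,c,d)\in A$ if and only if $\mathrm{LBCT}_F(a,c,d)=4$; and for $c,d,b\in\mathbb{F}_{2^n}^*$, $(c,d,b)\in B$ if and only if $\mathrm{UBCT}_F(c,d,b)=4$.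
   Context: $\mathrm{DDT}_F(a,b)=|\{X:F(X+a)+F(X)=b\}|$; $F$ is differentially $4$-uniform if $\mathrm{DDT}_F(a,b)\le4$ for all $a\neq0$, $b$. For any function $F$: $\mathrm{EBCT}_F(a,b,c,d)=|\{X: F(X)+F(X+a)=b,\ F(X)+F(X+c)=d,\ F(X+a+c)+F(X+a)=d\}|$; $\mathrm{LBCT}_F(a,b,c)=|\{X: \exists Y,\ X+Y=b,\ F(X+a)+F(Y+a)=c,\ F(X)+F(Y)=c\}|$; $\mathrm{UBCT}_F(a,b,c)=|\{X: \exists Y,\ F(X+a)+F(Y+a)=c,\ F(X)+F(Y)=c,\ F(X)+F(X+a)=b\}|$ (variables in $\mathbb{F}_{2^n}$). *)

(* Defs.v *)
(* F_{2^n} is modelled as a finite field K with #|K| = 2^n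
   (hence of characteristic 2, so "+" is the XOR-like addition). *)
From mathcomp Require Import all_boot all_algebra all_field.
Set Implicit Arguments. Unset Strict Implicit. Unset Printing Implicit Defensive.
Import GRing.Theory.
Local Open Scope ring_scope.

Section Tables.
Variable K : finFieldType.
Variable F : K -> K.

Definition DDT (a b : K) : nat := #|[set X : K | F (X + a) + F X == b]|.

Definition diff_4_uniform : Prop :=
  forall a b : K, a != 0 -> (DDT a b <= 4)%N.

Definition EBCT (a b c d : K) : nat :=
  #|[set X : K | [&& F X + F (X + a) == b,
                     F X + F (X + c) == d &
                     F (X + a + c) + F (X + a) == d]]|.

Definition LBCT (a b c : K) : nat :=
  #|[set X : K | [exists Y : K, [&& X + Y == b,
                                   F (X + a) + F (Y + a) == c &
                                   F X + F Y == c]]]|.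

Definition UBCT (a b c : K) : nat :=
  #|[set X : K | [exists Y : K, [&& F (X + a) + F (Y + a) == c,
                                   F X + F Y == c &
                                   F X + F (X + a) == b]]]|.
End Tables.

(* Main.v *)
Require Import Defs.
From mathcomp Require Import all_boot all_algebra all_field.
Set Implicit Arguments. Unset Strict Implicit. Unset Printing Implicit Defensive.
Import GRing.Theory.
Local Open Scope ring_scope.

Lemma c2addK (K : finFieldType) (c2 : 2%N \in [pchar K]) (x y : K) : x + y + y = x.
Proof. by rewrite -addrA (addrr_pchar2 c2) addr0. Qed.

Lemma c2solve (K : finFieldType) (c2 : 2%N \in [pchar K]) (x y z : K) :
  x + y = z -> y = x + z.
Proof. by move<-; rewrite addrA (addrr_pchar2 c2) add0r. Qed.

Lemma c2solve' (K : finFieldType) (c2 : 2%N \in [pchar K]) (x y z : K) :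
  x + y = z -> x = z + y.
Proof. by move<-; rewrite (c2addK c2). Qed.

Lemma c2neq (K : finFieldType) (x y : K) : (x == x + y) = (y == 0).
Proof. by rewrite -{1}[x]addr0 (inj_eq (@addrI _ x)) eq_sym. Qed.

Lemma uniq_card (T : finType) (s : seq T) (A : {set T}) :
  uniq s -> {subset s <= A} -> (size s <= #|A|)%N.
Proof.
move=> us sA; rewrite -(card_uniqP us); apply: subset_leq_card.
by apply/subsetP.
Qed.

Lemma four_le (K : finFieldType) (c2 : 2%N \in [pchar K]) (S : {set K}) (a c X : K) :
  a != 0 -> c != 0 -> a != c ->
  (forall Y, Y \in S -> Y + a \in S) -> (forall Y, Y \in S -> Y + c \in S) ->
  X \in S -> (4 <= #|S|)%N.
Proof.
move=> a0 c0 ac Sa Sc XS.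
have ac2 : a + c != 0 by rewrite addr_eq0 (oppr_pchar2 c2).
apply: (@uniq_card _ [seq X + t | t <- [:: 0; a; c; a + c]]).
  rewrite (map_inj_uniq (@addrI _ X)) /= !inE !negb_or.
  rewrite ![0 == _]eq_sym a0 c0 ac2 ac /=.
  rewrite -{1}[a]addr0 -{1}[c]addr0 [a + c]addrC -{2}[c]addr0.
  by rewrite !(inj_eq (@addrI _ _)) addr0 !(eq_sym 0) c0 a0.
move=> y; rewrite /= !inE => /or4P [] /eqP ->; rewrite ?addr0 ?addrA; auto.
Qed.

Lemma card_ge1 (T : finType) (A : {set T}) : (0 < #|A|)%N -> exists x, x \in A.
Proof. by rewrite card_gt0 => /set0Pn. Qed.

Definition Tset (K : finFieldType) (F : K -> K) (c d : K) :=
  [set X | F X + F (X + c) == d].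
Definition Eset (K : finFieldType) (F : K -> K) (a b c d : K) :=
  [set X : K | [&& F X + F (X + a) == b,
                     F X + F (X + c) == d &
                     F (X + a + c) + F (X + a) == d]].
Definition Lset (K : finFieldType) (F : K -> K) (a c d : K) :=
  [set X | (F X + F (X + c) == d) && (F (X + a) + F (X + a + c) == d)].
Definition Uset (K : finFieldType) (F : K -> K) (c d b : K) :=
  [set X : K | [exists Y : K, [&& F (X + c) + F (Y + c) == b,
                                   F X + F Y == b &
                                   F X + F (X + c) == d]]].

Lemma EBCTE (K : finFieldType) (F : K -> K) a b c d : EBCT F a b c d = #|Eset F a b c d|.
Proof. by []. Qed.
Lemma UBCTE (K : finFieldType) (F : K -> K) c d b : UBCT F c d b = #|Uset F c d b|.
Proof. by []. Qed.

Lemma LBCTE (K : finFieldType) (c2 : 2%N \in [pchar K]) (F : K -> K) a c d :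
  LBCT F a c d = #|Lset F a c d|.
Proof.
apply: eq_card => X; rewrite !inE; apply/existsP/andP.
  case=> Y /and3P [/eqP hY h1 h2]; rewrite (c2solve c2 hY) in h1 h2.
  by split=> //; rewrite addrAC.
case=> h1 h2; exists (X + c); rewrite addrA (addrr_pchar2 c2) add0r eqxx h1 /=.
by rewrite addrAC h2.
Qed.

Lemma Tbound (K : finFieldType) (F : K -> K) c d :
  diff_4_uniform F -> c != 0 -> (#|Tset F c d| <= 4)%N.
Proof.
move=> h4 c0; apply: leq_trans (h4 c d c0); rewrite /DDT.
by apply: subset_leq_card; apply/subsetP=> X; rewrite !inE addrC.
Qed.

Lemma E_a (K : finFieldType) (c2 : 2%N \in [pchar K]) (F : K -> K) a b c d X :
  X \in Eset F a b c d -> X + a \in Eset F a b c d.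
Proof.
rewrite !inE => /and3P [h1 h2 h3]; rewrite !(c2addK c2).
by rewrite addrC h1 addrC h3 addrC h2.
Qed.

Lemma E_c (K : finFieldType) (c2 : 2%N \in [pchar K]) (F : K -> K) a b c d X :
  X \in Eset F a b c d -> X + c \in Eset F a b c d.
Proof.
rewrite !inE => /and3P [h1 h2 h3].
have -> : X + c + a = X + a + c by rewrite addrAC.
rewrite !(c2addK c2) [F (X + c) + F X]addrC h2 [F (X + a) + _]addrC h3 andbT.
rewrite (c2solve c2 (eqP h2)) (c2solve' c2 (eqP h3)) addrA (c2addK c2).
by rewrite andbT.
Qed.

Lemma L_a (K : finFieldType) (c2 : 2%N \in [pchar K]) (F : K -> K) a c d X :
  X \in Lset F a c d -> X + a \in Lset F a c d.
Proof.
by rewrite !inE => /andP [h1 h2]; rewrite !(c2addK c2) h1 h2.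
Qed.

Lemma L_c (K : finFieldType) (c2 : 2%N \in [pchar K]) (F : K -> K) a c d X :
  X \in Lset F a c d -> X + c \in Lset F a c d.
Proof.
rewrite !inE => /andP [h1 h2].
have -> : X + c + a = X + a + c by rewrite addrAC.
by rewrite !(c2addK c2) addrC h1 addrC h2.
Qed.

Lemma E_L (K : finFieldType) (F : K -> K) a b c d :
  Eset F a b c d \subset Lset F a c d.
Proof.
by apply/subsetP=> X; rewrite !inE => /and3P [h1 h2 h3]; rewrite h2 addrC h3.
Qed.

Lemma L_T (K : finFieldType) (F : K -> K) a c d :
  Lset F a c d \subset Tset F c d.
Proof. by apply/subsetP=> X; rewrite !inE => /andP []. Qed.

Lemma U_T (K : finFieldType) (F : K -> K) c d b :
  Uset F c d b \subset Tset F c d.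
Proof. by apply/subsetP=> X; rewrite !inE => /existsP [Y /and3P []]. Qed.

Lemma E_U (K : finFieldType) (c2 : 2%N \in [pchar K]) (F : K -> K) a b c d :
  Eset F a b c d \subset Uset F c d b.
Proof.
apply/subsetP=> X XE; rewrite /Uset; have := E_c c2 XE; move: XE; rewrite !inE.
move=> /and3P [h1 h2 h3] /and3P [k1 _ _]; apply/existsP; exists (X + a).
by rewrite h1 h2 [X + a + c]addrAC k1.
Qed.

Lemma Eaa (K : finFieldType) (c2 : 2%N \in [pchar K]) (F : K -> K) a d :
  #|Eset F a d a d| = #|Tset F a d|.
Proof.
by apply: eq_card => X; rewrite !inE (c2addK c2) andbb [F X + _]addrC andbb.
Qed.

Lemma Laa (K : finFieldType) (c2 : 2%N \in [pchar K]) (F : K -> K) a d :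
  #|Lset F a a d| = #|Tset F a d|.
Proof.
by apply: eq_card => X; rewrite !inE (c2addK c2) [F (X + a) + _]addrC andbb.
Qed.

Lemma Uaa (K : finFieldType) (c2 : 2%N \in [pchar K]) (F : K -> K) a d :
  #|Uset F a d d| = #|Tset F a d|.
Proof.
apply: eq_card => X; rewrite !inE; apply/existsP/idP.
  by case=> Y /and3P [].
move=> h; exists (X + a); rewrite (c2addK c2) h addrC h.
by [].
Qed.

Theorem mainTheorem10 (n : nat) (K : finFieldType) (F : K -> K) :
  #|K| = (2 ^ n)%N ->
  diff_4_uniform F ->
  (forall a b c d : K, a != 0 -> b != 0 -> c != 0 -> d != 0 ->
     (EBCT F a b c d = 2%N <-> (LBCT F a c d = 2%N /\ UBCT F c d b = 2%N)))
  /\ (forall a c d : K, a != 0 -> c != 0 -> d != 0 ->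
     ((exists b : K, EBCT F a b c d = 4%N) <-> LBCT F a c d = 4%N))
  /\ (forall c d b : K, c != 0 -> d != 0 -> b != 0 ->
     ((exists a : K, EBCT F a b c d = 4%N) <-> UBCT F c d b = 4%N)).
Proof.
move=> hK h4.
have c2 : 2%N \in [pchar K] := card_finPcharP hK (isT : prime 2).
have no2 : forall (S : {set K}) a c, a != 0 -> c != 0 -> a != c ->
  (forall Y, Y \in S -> Y + a \in S) -> (forall Y, Y \in S -> Y + c \in S) ->
  #|S| <> 2%N.
  move=> S a c a0 c0 ac Sa Sc hS.
  have [X XS] : exists X, X \in S by apply: card_ge1; rewrite hS.
  by have := four_le c2 a0 c0 ac Sa Sc XS; rewrite hS.
split; [|split].
- move=> a b c d a0 b0 c0 d0; rewrite EBCTE UBCTE (LBCTE c2); split.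
  + move=> hE; have ac : a = c.
      case: (eqVneq a c) => // ac; exfalso.
      exact: (no2 _ a c a0 c0 ac (@E_a _ c2 F a b c d) (@E_c _ c2 F a b c d) hE).
    subst c.
    have [X XE] : exists X, X \in Eset F a b a d by apply: card_ge1; rewrite hE.
    move: XE; rewrite inE => /and3P [/eqP h1 /eqP h2 _].
    have bd : b = d by rewrite -h1 -h2.
    rewrite bd in hE *; by rewrite (Laa c2) (Uaa c2) -(Eaa c2).
  + case=> hL hU; have ac : a = c.
      case: (eqVneq a c) => // ac; exfalso.
      exact: (no2 _ a c a0 c0 ac (@L_a _ c2 F a c d) (@L_c _ c2 F a c d) hL).
    subst c; rewrite (Laa c2) in hL.
    have [X XU] : exists X, X \in Uset F a d b by apply: card_ge1; rewrite hU.
    move: XU; rewrite /Uset inE => /existsP [Y /and3P [/eqP h1 /eqP h2 /eqP h3]].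
    have YT : Y \in Tset F a d.
      by rewrite inE (c2solve c2 h2) (c2solve c2 h1) addrACA (addrr_pchar2 c2) addr0 h3.
    have XT : X \in Tset F a d by rewrite inE h3.
    have XaT : X + a \in Tset F a d by rewrite inE (c2addK c2) addrC h3.
    have : Y \in [:: X; X + a].
      apply/negPn/negP => hY.
      have := @uniq_card _ [:: X; X + a; Y] (Tset F a d).
      rewrite hL /= => H; suff: (3 <= 2)%N by [].
      apply: H.
        move: hY; rewrite !inE !negb_or => /andP [hY1 hY2].
        by rewrite c2neq a0 eq_sym hY1 eq_sym hY2.
      by move=> z; rewrite !in_cons in_nil orbF => /or3P [] /eqP ->.
    rewrite !inE => /orP [] /eqP hY; subst Y.
      by move: b0; rewrite -h2 (addrr_pchar2 c2) eqxx.
    have bd : b = d by rewrite -h2 h3.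
    by rewrite bd (Eaa c2).
- move=> a c d a0 c0 d0; rewrite (LBCTE c2); split.
  + case=> b; rewrite EBCTE => hE; apply/eqP; rewrite eqn_leq.
    rewrite (leq_trans (subset_leq_card (L_T F a c d)) (@Tbound _ F c d h4 c0)) /=.
    by rewrite -hE subset_leq_card // E_L.
  + move=> hL; case: (eqVneq a c) => [ac|ac].
      by subst c; exists d; rewrite EBCTE (Eaa c2) -(Laa c2).
    have [X XL] : exists X, X \in Lset F a c d by apply: card_ge1; rewrite hL.
    exists (F X + F (X + a)); rewrite EBCTE.
    have XE : X \in Eset F a (F X + F (X + a)) c d.
      by move: XL; rewrite !inE => /andP [h1 h2]; rewrite eqxx h1 addrC h2.
    apply/eqP; rewrite eqn_leq (four_le c2 a0 c0 ac (@E_a _ c2 F _ _ _ _) (@E_c _ c2 F _ _ _ _) XE) andbT.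
    exact: leq_trans (subset_leq_card (subset_trans (E_L _ _ _ _ _) (L_T _ _ _ _))) (@Tbound _ F c d h4 c0).
- move=> c d b c0 d0 b0; rewrite UBCTE; split.
  + case=> a; rewrite EBCTE => hE; apply/eqP; rewrite eqn_leq.
    rewrite (leq_trans (subset_leq_card (U_T F c d b)) (@Tbound _ F c d h4 c0)) /=.
    by rewrite -hE subset_leq_card // (E_U c2).
  + move=> hU.
    have [X XU] : exists X, X \in Uset F c d b by apply: card_ge1; rewrite hU.
    move: XU; rewrite /Uset inE => /existsP [Y /and3P [/eqP h1 /eqP h2 /eqP h3]].
    have YT : F Y + F (Y + c) = d.
      by rewrite (c2solve c2 h2) (c2solve c2 h1) addrACA (addrr_pchar2 c2) addr0 h3.
    pose a := X + Y.
    have hY : Y = X + a by rewrite /a addrA (addrr_pchar2 c2) add0r.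
    rewrite hY in h1 h2 YT.
    have a0 : a != 0.
      apply: contraNneq b0 => a0; by rewrite -h2 a0 addr0 (addrr_pchar2 c2).
    exists a; rewrite EBCTE.
    case: (eqVneq a c) => [ac|ac].
      rewrite ac in h2; have bd : b = d by rewrite -h2 h3.
      rewrite ac bd (Eaa c2); apply/eqP; rewrite eqn_leq (@Tbound _ F c d h4 c0).
      by rewrite -hU subset_leq_card // U_T.
    have XE : X \in Eset F a b c d.
      by rewrite inE [F (X + a + c) + _]addrC YT h2 h3 !eqxx.
    apply/eqP; rewrite eqn_leq (four_le c2 a0 c0 ac (@E_a _ c2 F _ _ _ _) (@E_c _ c2 F _ _ _ _) XE) andbT.
    exact: leq_trans (subset_leq_card (subset_trans (E_L _ _ _ _ _) (L_T _ _ _ _))) (@Tbound _ F c d h4 c0).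
Qed.
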